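(* Let $H:\Sigma\to\mathbb R$ be continuous with summable variation. \begin{enumerate} \item For every $x\in\mathrm{Mather}(H)$, the function $h(x,\cdot)$ belongs to $\mathbb K$ and is a calibrated sub-action. \item If $V\in C^0(\Sigma)$ is a calibrated sub-action, then $V\in\mathbb K$ and $V(y)=\min\{V(x)+h(x,y): x\in\mathrm{Mather}(H)\}$ for all $y\in\Sigma$. \end{enumerate}
   Context: $\Sigma:=\{0,1\}^{\mathbb N}$, $\sigma$ the left shift; $x\stackrel{n}{=}y$ means $x_j=y_j$ for $0\le j\le n-1$; $\mathrm{var}(f,n):=\sup\{|f(x)-f(y)|:x\stackrel{n}{=}y\}$; summable variation: $\sum_n\mathrm{var}(H,n)<\infty$. $\mathbb K:=\{V\in C^0(\Sigma):\forall n\ge1,\ \mathrm{var}(V,n)\le\sum_{k\ge n+1}\mathrm{var}(H,k)\}$. A minimizing measure is a $\sigma$-invariant probability minimizing $\int H\,d\nu$ over $\sigma$-invariant probabilities; $\bar H$ is the minimal value; $\mathrm{Mather}(H)$ is the union of supports of minimizing measures. Lax–Oleinik operator $T[V](y):=\min\{V(x)+H(x):\sigma(x)=y\}$; calibrated sub-action: continuous $V$ with $T[V]=V+\bar H$. Peierls barrier: $h(x,y):=\lim_{p\to\infty}\lim_{n\to\infty}S_n^p(x,y)$, $S_n^p(x,y):=\inf\{\sum_{i=0}^{k-1}[H(\sigma^iz)-\bar H]:k\ge n,\ z\stackrel{p}{=}x,\ \sigma^k(z)\stackrel{p}{=}y\}$. *)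

(* Defs.v *)
From Stdlib Require Import Reals Lra Lia List.
Import ListNotations.
Open Scope R_scope.

Definition Sigma := nat -> bool.

Definition shift (x : Sigma) : Sigma := fun j => x (S j).
Definition shiftn (k : nat) (x : Sigma) : Sigma := fun j => x (k + j)%nat.

Definition agree (n : nat) (x y : Sigma) : Prop :=
  forall j, (j < n)%nat -> x j = y j.

(** continuity for the product topology (cylinders = balls) *)
Definition continuous_S (f : Sigma -> R) : Prop :=
  forall x eps, 0 < eps -> exists n, forall y, agree n x y -> Rabs (f x - f y) < eps.

Definition var_is (f : Sigma -> R) (n : nat) (v : R) : Prop :=
  is_lub (fun r => exists x y, agree n x y /\ r = Rabs (f x - f y)) v.

Definition summable_variation (H : Sigma -> R) : Prop :=
  exists (v : nat -> R) (l : R),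
    (forall n, var_is H n (v n)) /\ Un_cv (fun N => sum_f_R0 v N) l.

(** The set K: V continuous and for n >= 1,
    var(V,n) <= sum_{k >= n+1} var(H,k) = l - sum_{k=0}^{n} var(H,k). *)
Definition in_K (H : Sigma -> R) (V : Sigma -> R) : Prop :=
  continuous_S V /\
  forall (v : nat -> R) (l : R),
    (forall n, var_is H n (v n)) -> Un_cv (fun N => sum_f_R0 v N) l ->
    forall n, (1 <= n)%nat ->
      forall x y, agree n x y -> Rabs (V x - V y) <= l - sum_f_R0 v n.

(** Borel probability measures on Sigma, represented (Kolmogorov/Caratheodory)
    by their values on cylinders [w], w a finite word. *)
Definition prob_measure (mu : list bool -> R) : Prop :=
  (forall w, 0 <= mu w) /\ mu [] = 1 /\
  (forall w, mu w = mu (w ++ [false]) + mu (w ++ [true])).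

(** sigma-invariance: mu(sigma^{-1}[w]) = mu([0w]) + mu([1w]) = mu([w]) *)
Definition invariant (mu : list bool -> R) : Prop :=
  forall w, mu w = mu (false :: w) + mu (true :: w).

Definition inv_prob (mu : list bool -> R) : Prop := prob_measure mu /\ invariant mu.

Fixpoint words (n : nat) : list (list bool) :=
  match n with
  | O => [ [] ]
  | S m => flat_map (fun w => [w ++ [false]; w ++ [true]]) (words m)
  end.

Definition ext (w : list bool) : Sigma := fun j => nth j w false.

Definition riemann_sum (mu : list bool -> R) (f : Sigma -> R) (n : nat) : R :=
  fold_right Rplus 0 (map (fun w => mu w * f (ext w)) (words n)).

(** I = int f dmu (for continuous f) *)
Definition integral_is (mu : list bool -> R) (f : Sigma -> R) (I : R) : Prop :=
  Un_cv (riemann_sum mu f) I.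

Definition is_inf (E : R -> Prop) (m : R) : Prop :=
  (forall r, E r -> m <= r) /\ (forall b, (forall r, E r -> b <= r) -> b <= m).

Definition Hbar_is (H : Sigma -> R) (Hbar : R) : Prop :=
  is_inf (fun I => exists mu, inv_prob mu /\ integral_is mu H I) Hbar.

Definition minimizing (H : Sigma -> R) (Hbar : R) (mu : list bool -> R) : Prop :=
  inv_prob mu /\ integral_is mu H Hbar.

Definition prefix (n : nat) (x : Sigma) : list bool := map x (seq 0 n).

Definition in_support (mu : list bool -> R) (x : Sigma) : Prop :=
  forall n, 0 < mu (prefix n x).

Definition Mather (H : Sigma -> R) (Hbar : R) (x : Sigma) : Prop :=
  exists mu, minimizing H Hbar mu /\ in_support mu x.

(** calibrated sub-action: T[V] = V + Hbar, T[V](y) = min{V x + H x : sigma x = y} *)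
Definition calibrated (H : Sigma -> R) (Hbar : R) (V : Sigma -> R) : Prop :=
  continuous_S V /\
  forall y,
    (forall x, shift x = y -> V y + Hbar <= V x + H x) /\
    (exists x, shift x = y /\ V x + H x = V y + Hbar).

Fixpoint birkhoff (H : Sigma -> R) (Hbar : R) (z : Sigma) (k : nat) : R :=
  match k with
  | O => 0
  | S m => birkhoff H Hbar z m + (H (shiftn m z) - Hbar)
  end.

Definition S_is (H : Sigma -> R) (Hbar : R) (n p : nat) (x y : Sigma) (s : R) : Prop :=
  is_inf (fun r => exists k z, (n <= k)%nat /\ agree p z x /\ agree p (shiftn k z) y
                               /\ r = birkhoff H Hbar z k) s.

Definition peierls_is (H : Sigma -> R) (Hbar : R) (x y : Sigma) (r : R) : Prop :=
  exists (s : nat -> nat -> R) (L : nat -> R),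
    (forall n p, S_is H Hbar n p x y (s n p)) /\
    (forall p, Un_cv (fun n => s n p) (L p)) /\
    Un_cv L r.

(* Main.v *)
Require Import Defs.
From Stdlib Require Import Reals Lra Lia List ClassicalEpsilon Classical FunctionalExtensionality Cantor Arith.
Import ListNotations.
Open Scope R_scope.

Fixpoint sumN (n : nat) (F : nat -> R) : R :=
  match n with O => 0 | S m => sumN m F + F m end.

Lemma sumN_ext n F G : (forall i, (i < n)%nat -> F i = G i) -> sumN n F = sumN n G.
Proof. induction n; simpl; intros; auto. rewrite IHn by (intros; apply H; lia). rewrite H by lia. auto. Qed.

Lemma sumN_plus n F G : sumN n (fun i => F i + G i) = sumN n F + sumN n G.
Proof. induction n; simpl; [lra| rewrite IHn; lra]. Qed.

Lemma sumN_scal n c F : sumN n (fun i => c * F i) = c * sumN n F.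
Proof. induction n; simpl; [lra| rewrite IHn; lra]. Qed.

Lemma sumN_le n F G : (forall i, (i < n)%nat -> F i <= G i) -> sumN n F <= sumN n G.
Proof. induction n; simpl; intros; [lra|]. assert (F n <= G n) by (apply H; lia).
  assert (sumN n F <= sumN n G) by (apply IHn; intros; apply H; lia). lra. Qed.

Lemma sumN_const n c : sumN n (fun _ => c) = INR n * c.
Proof. induction n; simpl sumN; [simpl; lra| rewrite IHn, S_INR; lra]. Qed.

Lemma sumN_shift n a : sumN n (fun i => a (S i)) = sumN n a - a 0%nat + a n.
Proof. induction n; simpl; [lra| rewrite IHn; lra]. Qed.

Lemma sumN_front n a : sumN (S n) a = a 0%nat + sumN n (fun i => a (S i)).
Proof. rewrite sumN_shift. simpl. lra. Qed.

Lemma shiftn_0 z : shiftn 0 z = z.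
Proof. reflexivity. Qed.

Lemma shiftn_shiftn a b z : shiftn a (shiftn b z) = shiftn (b + a) z.
Proof. apply functional_extensionality; intro j; unfold shiftn; f_equal; lia. Qed.

Lemma shift_shiftn k z : shift (shiftn k z) = shiftn (S k) z.
Proof. apply functional_extensionality; intro j; unfold shift, shiftn; f_equal; lia. Qed.

Lemma shiftn_S k z : shiftn (S k) z = shiftn k (shift z).
Proof. apply functional_extensionality; intro j; unfold shift, shiftn; f_equal. Qed.

Lemma shiftn_1 z : shiftn 1 z = shift z.
Proof. reflexivity. Qed.

Definition bcons (b : bool) (y : Sigma) : Sigma :=
  fun j => match j with O => b | S j' => y j' end.

Lemma shift_bcons b y : shift (bcons b y) = y.
Proof. reflexivity. Qed.

Lemma bcons_shift x : x = bcons (x 0%nat) (shift x).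
Proof. apply functional_extensionality; intros [|j]; reflexivity. Qed.

Lemma agree_mono n m x y : (m <= n)%nat -> agree n x y -> agree m x y.
Proof. unfold agree; intros; apply H0; lia. Qed.
Lemma agree_sym n x y : agree n x y -> agree n y x.
Proof. unfold agree; intros; symmetry; auto. Qed.
Lemma agree_trans n x y z : agree n x y -> agree n y z -> agree n x z.
Proof. unfold agree; intros; rewrite H; auto. Qed.
Lemma agree_refl n x : agree n x x.
Proof. unfold agree; auto. Qed.
Lemma agree_0 x y : agree 0 x y.
Proof. unfold agree; intros; lia. Qed.
Lemma agree_shiftn k m x y : agree (k + m) x y -> agree m (shiftn k x) (shiftn k y).
Proof. unfold agree, shiftn; intros; apply H; lia. Qed.
Lemma agree_shift m x y : agree (S m) x y -> agree m (shift x) (shift y).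
Proof. unfold agree, shift; intros; apply H; lia. Qed.
Lemma agree_bcons m b x y : agree m x y -> agree (S m) (bcons b x) (bcons b y).
Proof. unfold agree; intros Ha [|j] Hj; simpl; auto; apply Ha; lia. Qed.

Lemma length_prefix n z : length (prefix n z) = n.
Proof. unfold prefix; rewrite length_map, length_seq; auto. Qed.

Lemma nth_prefix n z j : (j < n)%nat -> nth j (prefix n z) false = z j.
Proof. intros; unfold prefix. rewrite nth_indep with (d' := z 0%nat) by (rewrite length_map, length_seq; lia).
  rewrite map_nth, seq_nth by lia. auto. Qed.

Lemma prefix_S n z : prefix (S n) z = prefix n z ++ [z n].
Proof. unfold prefix; rewrite seq_S, map_app; reflexivity. Qed.

Lemma prefix_S_front n z : prefix (S n) z = z 0%nat :: prefix n (shift z).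
Proof. unfold prefix. simpl. f_equal. rewrite <- seq_shift, map_map. reflexivity. Qed.

Lemma agree_prefix n x y : agree n x y <-> prefix n x = prefix n y.
Proof. split.
  - intro Ha. unfold prefix. apply map_ext_in. intros j Hj. apply in_seq in Hj. apply Ha; lia.
  - intros He j Hj. rewrite <- (nth_prefix n x j Hj), <- (nth_prefix n y j Hj), He; auto. Qed.

Lemma ext_nth w j : ext w j = nth j w false.
Proof. reflexivity. Qed.

Lemma prefix_ext w : prefix (length w) (ext w) = w.
Proof. apply nth_ext with (d := false) (d' := false). rewrite length_prefix; auto.
  intros j Hj. rewrite length_prefix in Hj. rewrite nth_prefix by auto. reflexivity. Qed.

Lemma agree_ext_app u w : agree (length u) (ext (u ++ w)) (ext u).
Proof. intros j Hj. unfold ext. rewrite app_nth1 by auto. auto. Qed.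

Lemma agree_ext_prefix n z : agree n (ext (prefix n z)) z.
Proof. intros j Hj. unfold ext. apply nth_prefix; auto. Qed.

Lemma shift_ext b w : shift (ext (b :: w)) = ext w.
Proof. reflexivity. Qed.

Definition cat (w : list bool) (y : Sigma) : Sigma :=
  fun j => if Nat.ltb j (length w) then nth j w false else y (j - length w)%nat.

Lemma shiftn_cat w y : shiftn (length w) (cat w y) = y.
Proof. apply functional_extensionality; intro j; unfold shiftn, cat.
  destruct (Nat.ltb_spec (length w + j) (length w)); [lia|]. f_equal; lia. Qed.

Lemma agree_cat_prefix k z y : agree k (cat (prefix k z) y) z.
Proof. intros j Hj. unfold cat. rewrite length_prefix. destruct (Nat.ltb_spec j k); [|lia].
  apply nth_prefix; auto. Qed.

Lemma agree_cat_prefix2 k n z y : agree n y (shiftn k z) -> agree (k + n) (cat (prefix k z) y) z.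
Proof. intros Ha j Hj. unfold cat. rewrite length_prefix. destruct (Nat.ltb_spec j k).
  - apply nth_prefix; auto.
  - rewrite Ha by lia. unfold shiftn. f_equal; lia. Qed.

Lemma shiftn_cat_prefix k z y : shiftn k (cat (prefix k z) y) = y.
Proof. rewrite <- (length_prefix k z) at 1. apply shiftn_cat. Qed.

Lemma birkhoff_add H Hbar z a b :
  birkhoff H Hbar z (a + b) = birkhoff H Hbar z a + birkhoff H Hbar (shiftn a z) b.
Proof. induction b. rewrite Nat.add_0_r; simpl; lra.
  rewrite Nat.add_succ_r. simpl. rewrite IHb, shiftn_shiftn. lra. Qed.

Lemma birkhoff_front H Hbar z k :
  birkhoff H Hbar z (S k) = (H z - Hbar) + birkhoff H Hbar (shift z) k.
Proof. change (S k) with (1 + k)%nat. rewrite birkhoff_add, shiftn_1. f_equal. cbn [birkhoff]. change (shiftn 0 z) with z. ring. Qed.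

Lemma birkhoff_sumN H Hbar z k : birkhoff H Hbar z k = sumN k (fun i => H (shiftn i z) - Hbar).
Proof. induction k; simpl; auto. rewrite IHk; auto. Qed.

Lemma le_eps a b : (forall eps, 0 < eps -> a <= b + eps) -> a <= b.
Proof. intros. destruct (Rle_dec a b); auto. exfalso. assert (0 < (a - b)/2) by lra.
  specialize (H _ H0). lra. Qed.

Lemma lim_le_ev (u w : nat -> R) a b N : (forall n, (N <= n)%nat -> u n <= w n) ->
  Un_cv u a -> Un_cv w b -> a <= b.
Proof. intros Hle Hu Hw. apply le_eps. intros eps He.
  destruct (Hu (eps/2)) as [N1 HN1]; [lra|]. destruct (Hw (eps/2)) as [N2 HN2]; [lra|].
  set (n := (N + N1 + N2)%nat). specialize (HN1 n ltac:(unfold n; lia)). specialize (HN2 n ltac:(unfold n; lia)).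
  specialize (Hle n ltac:(unfold n; lia)). unfold R_dist in *. apply Rabs_def2 in HN1. apply Rabs_def2 in HN2. lra. Qed.

Lemma lim_le_const_ev (u : nat -> R) a c N : (forall n, (N <= n)%nat -> u n <= c) -> Un_cv u a -> a <= c.
Proof. intros. apply (lim_le_ev u (fun _ => c) a c N); auto. intros e He; exists O; intros; unfold R_dist; rewrite Rminus_diag, Rabs_R0; auto. Qed.

Lemma lim_ge_const_ev (u : nat -> R) a c N : (forall n, (N <= n)%nat -> c <= u n) -> Un_cv u a -> c <= a.
Proof. intros. apply (lim_le_ev (fun _ => c) u c a N); auto. intros e He; exists O; intros; unfold R_dist; rewrite Rminus_diag, Rabs_R0; auto. Qed.

Lemma Un_cv_shift (u : nat -> R) a : Un_cv u a -> Un_cv (fun n => u (S n)) a.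
Proof. intros Hu e He. destruct (Hu e He) as [N HN]. exists N. intros; apply HN; lia. Qed.

Lemma Un_cv_unshift (u : nat -> R) a : Un_cv (fun n => u (S n)) a -> Un_cv u a.
Proof. intros Hu e He. destruct (Hu e He) as [N HN]. exists (S N). intros n Hn.
  destruct n; [lia|]. apply HN; lia. Qed.

Lemma Un_cv_ext (u w : nat -> R) a : (forall n, u n = w n) -> Un_cv u a -> Un_cv w a.
Proof. intros He Hu e Hep. destruct (Hu e Hep) as [N HN]. exists N; intros; rewrite <- He; auto. Qed.

Lemma Un_cv_const c : Un_cv (fun _ => c) c.
Proof. intros e He; exists O; intros; unfold R_dist; rewrite Rminus_diag, Rabs_R0; auto. Qed.

Lemma Rmin_close a b c d e : Rabs (a - c) < e -> Rabs (b - d) < e -> Rabs (Rmin a b - Rmin c d) < e.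
Proof. intros H1 H2. apply Rabs_def2 in H1; apply Rabs_def2 in H2. unfold Rmin.
  destruct (Rle_dec a b), (Rle_dec c d); apply Rabs_def1; lra. Qed.

Lemma CV_min (u w : nat -> R) a b : Un_cv u a -> Un_cv w b -> Un_cv (fun n => Rmin (u n) (w n)) (Rmin a b).
Proof. intros Hu Hw e He. destruct (Hu e He) as [N1 H1]. destruct (Hw e He) as [N2 H2].
  exists (N1 + N2)%nat. intros n Hn. unfold R_dist. apply Rmin_close; [apply H1|apply H2]; lia. Qed.

Lemma inf_exists (E : R -> Prop) (b : R) :
  (exists r, E r) -> (forall r, E r -> b <= r) -> {m | is_inf E m}.
Proof. intros Hne Hb.
  destruct (completeness (fun r => E (- r))) as [m [Hm1 Hm2]].
  - exists (- b). intros r Hr. specialize (Hb _ Hr). lra.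
  - destruct Hne as [r Hr]. exists (- r). rewrite Ropp_involutive; auto.
  - exists (- m). split.
    + intros r Hr. assert (- r <= m) by (apply Hm1; rewrite Ropp_involutive; auto). lra.
    + intros b' Hb'. assert (m <= - b'). { apply Hm2. intros r Hr. specialize (Hb' _ Hr). lra. } lra.
Qed.

Lemma is_inf_unique E a b : is_inf E a -> is_inf E b -> a = b.
Proof. intros [A1 A2] [B1 B2]. apply Rle_antisym; [apply B2|apply A2]; auto. Qed.

Lemma is_lub_unique E a b : is_lub E a -> is_lub E b -> a = b.
Proof. intros [A1 A2] [B1 B2]. apply Rle_antisym; [apply A2|apply B2]; auto. Qed.

Lemma is_inf_le E m r : is_inf E m -> E r -> m <= r.
Proof. intros [A _]; auto. Qed.

Lemma is_inf_ge E m b : is_inf E m -> (forall r, E r -> b <= r) -> b <= m.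
Proof. intros [_ A]; auto. Qed.

Lemma is_inf_mono (E F : R -> Prop) a b : (forall r, F r -> E r) -> is_inf E a -> is_inf F b -> a <= b.
Proof. intros Hs HE HF. apply (is_inf_ge F b a HF). intros; apply (is_inf_le E); auto. Qed.

Lemma Rabs_le_inv a b : Rabs a <= b -> - b <= a <= b.
Proof. unfold Rabs; destruct (Rcase_abs a); intros; lra. Qed.
Lemma Rabs_lt_inv a b : Rabs a < b -> - b < a < b.
Proof. unfold Rabs; destruct (Rcase_abs a); intros; lra. Qed.

Definition sumL (L : list R) : R := fold_right Rplus 0 L.
Definition SW (n : nat) (F : list bool -> R) : R := sumL (map F (words n)).

Lemma sumL_app l1 l2 : sumL (l1 ++ l2) = sumL l1 + sumL l2.
Proof. induction l1; simpl; [lra|]. unfold sumL in *; simpl; rewrite IHl1; lra. Qed.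

Lemma sumL_map_flat {A B : Type} (F : B -> R) (g : A -> list B) (L : list A) :
  sumL (map F (flat_map g L)) = sumL (map (fun a => sumL (map F (g a))) L).
Proof. induction L; simpl; auto. rewrite map_app, sumL_app, IHL. reflexivity. Qed.

Lemma SW_snoc n F : SW (S n) F = SW n (fun w => F (w ++ [false]) + F (w ++ [true])).
Proof. unfold SW. simpl words. rewrite sumL_map_flat. f_equal. apply map_ext. intro w. unfold sumL; simpl. lra. Qed.

Lemma SW_ext_in n F G : (forall w, In w (words n) -> F w = G w) -> SW n F = SW n G.
Proof. intros; unfold SW; f_equal; apply map_ext_in; auto. Qed.

Lemma SW_ext n F G : (forall w, F w = G w) -> SW n F = SW n G.
Proof. intros; apply SW_ext_in; auto. Qed.

Lemma sumL_map_plus {A} (F G : A -> R) L : sumL (map (fun w => F w + G w) L) = sumL (map F L) + sumL (map G L).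
Proof. induction L; unfold sumL in *; simpl; [lra| rewrite IHL; lra]. Qed.
Lemma sumL_map_scal {A} c (F : A -> R) L : sumL (map (fun w => c * F w) L) = c * sumL (map F L).
Proof. induction L; unfold sumL in *; simpl; [lra| rewrite IHL; lra]. Qed.
Lemma sumL_map_le {A} (F G : A -> R) L : (forall w, In w L -> F w <= G w) -> sumL (map F L) <= sumL (map G L).
Proof. induction L; unfold sumL in *; simpl; intros; [lra|].
  assert (F a <= G a) by (apply H; left; auto).
  assert (fold_right Rplus 0 (map F L) <= fold_right Rplus 0 (map G L)) by (apply IHL; intros; apply H; right; auto). lra. Qed.
Lemma sumL_map_nonneg {A} (F : A -> R) L : (forall w, In w L -> 0 <= F w) -> 0 <= sumL (map F L).
Proof. induction L as [|b L IH]; unfold sumL in *; simpl; intros Hp; [lra|].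
  assert (0 <= F b) by (apply Hp; left; auto).
  assert (0 <= fold_right Rplus 0 (map F L)) by (apply IH; intros; apply Hp; right; auto). lra. Qed.
Lemma sumL_map_term {A} (F : A -> R) L a : (forall w, In w L -> 0 <= F w) -> In a L -> F a <= sumL (map F L).
Proof. induction L as [|b L IH]; intros Hp Hin; [contradiction|].
  assert (0 <= sumL (map F L)) by (apply sumL_map_nonneg; intros; apply Hp; right; auto).
  assert (0 <= F b) by (apply Hp; left; auto).
  unfold sumL in *; simpl. destruct Hin as [<-|Hin]. lra.
  assert (F a <= fold_right Rplus 0 (map F L)) by (apply IH; auto; intros; apply Hp; right; auto). lra. Qed.

Lemma SW_plus n F G : SW n (fun w => F w + G w) = SW n F + SW n G.
Proof. apply sumL_map_plus. Qed.
Lemma SW_scal n c F : SW n (fun w => c * F w) = c * SW n F.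
Proof. apply sumL_map_scal. Qed.
Lemma SW_minus n F G : SW n (fun w => F w - G w) = SW n F - SW n G.
Proof. replace (SW n F - SW n G) with (SW n F + (-1) * SW n G) by ring. rewrite <- SW_scal, <- SW_plus.
  apply SW_ext; intros; ring. Qed.

Lemma words_length n w : In w (words n) -> length w = n.
Proof. revert w; induction n; simpl; intros w Hw.
  - destruct Hw as [<-|[]]; auto.
  - apply in_flat_map in Hw. destruct Hw as [w' [Hw' Hin]]. simpl in Hin.
    rewrite <- (IHn w' Hw'). destruct Hin as [<-|[<-|[]]]; rewrite length_app; simpl; lia. Qed.

Lemma prefix_in_words n z : In (prefix n z) (words n).
Proof. induction n; simpl; auto. rewrite prefix_S. apply in_flat_map. exists (prefix n z). split; auto.
  destruct (z n); simpl; auto. Qed.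

Lemma in_words w : In w (words (length w)).
Proof. rewrite <- (prefix_ext w) at 1. apply prefix_in_words. Qed.

Lemma SW_le_len n F G : (forall w, length w = n -> F w <= G w) -> SW n F <= SW n G.
Proof. intros; apply sumL_map_le. intros; apply H, words_length; auto. Qed.

Lemma SW_le n F G : (forall w, F w <= G w) -> SW n F <= SW n G.
Proof. intros; apply SW_le_len; auto. Qed.

Lemma SW_term n F z : (forall w, 0 <= F w) -> F (prefix n z) <= SW n F.
Proof. intros; apply sumL_map_term; auto. apply prefix_in_words. Qed.

Lemma SW_nonneg n F : (forall w, 0 <= F w) -> 0 <= SW n F.
Proof. intros. assert (SW n (fun _ => 0) <= SW n F) by (apply SW_le; auto).
  assert (SW n (fun _ => 0) = 0 * SW n (fun _ => 0)) by (rewrite <- SW_scal; apply SW_ext; intros; ring). lra. Qed.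

Lemma SW_abs n F G : (forall w, length w = n -> Rabs (F w) <= G w) -> Rabs (SW n F) <= SW n G.
Proof. intros Hb. apply Rabs_le. split.
  - assert (SW n (fun w => - G w) <= SW n F). { apply SW_le_len; intros. specialize (Hb w H). apply Rabs_le_inv in Hb. lra. }
    assert (SW n (fun w => - G w) = - SW n G). { rewrite <- (Rmult_1_l (SW n G)). rewrite Ropp_mult_distr_l, <- SW_scal. apply SW_ext; intros; ring. }
    lra.
  - apply SW_le_len; intros. specialize (Hb w H). apply Rabs_le_inv in Hb. lra. Qed.

Lemma SW_const n c : SW n (fun _ => c) = c * 2 ^ n.
Proof. revert c; induction n; intros. unfold SW; simpl; unfold sumL; simpl; ring.
  rewrite SW_snoc, IHn. simpl. ring. Qed.

Lemma SW_cons n F : SW (S n) F = SW n (fun w => F (false :: w) + F (true :: w)).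
Proof. revert F; induction n; intro F.
  - unfold SW; simpl; unfold sumL; simpl; ring.
  - rewrite SW_snoc, IHn, SW_snoc. apply SW_ext. intro w. simpl. ring. Qed.

Lemma SW_app m j F : SW (m + j) F = SW m (fun u => SW j (fun w => F (u ++ w))).
Proof. revert F; induction j; intro F.
  - rewrite Nat.add_0_r. apply SW_ext. intro u. unfold SW; simpl; unfold sumL; simpl. rewrite app_nil_r; ring.
  - rewrite Nat.add_succ_r, SW_snoc, IHj. apply SW_ext. intro u. rewrite SW_snoc. apply SW_ext. intro w.
    rewrite !app_assoc. auto. Qed.

Lemma SW_sumN n N (A : nat -> list bool -> R) : SW n (fun w => sumN N (fun i => A i w)) = sumN N (fun i => SW n (A i)).
Proof. induction N; simpl. rewrite (SW_ext _ _ (fun _ => 0 * 0)) by (intros; ring). rewrite SW_scal; ring.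
  rewrite SW_plus, IHN; auto. Qed.

Lemma mu_sum mu (Hmu : prob_measure mu) j u : SW j (fun w => mu (u ++ w)) = mu u.
Proof. revert u; induction j; intro u.
  - unfold SW; simpl; unfold sumL; simpl. rewrite app_nil_r; ring.
  - rewrite SW_snoc. rewrite (SW_ext _ _ (fun w => mu (u ++ w))). apply IHj.
    intro w. destruct Hmu as [_ [_ Ha]]. rewrite (Ha (u ++ w)). rewrite !app_assoc; auto. Qed.

Lemma mu_total mu (Hmu : prob_measure mu) n : SW n mu = 1.
Proof. transitivity (SW n (fun w => mu ([] ++ w))). apply SW_ext; auto.
  rewrite (mu_sum mu Hmu n []). destruct Hmu as [_ [H1 _]]; auto. Qed.

Lemma riemann_SW mu F n : riemann_sum mu F n = SW n (fun w => mu w * F (ext w)).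
Proof. reflexivity. Qed.

Lemma riemann_cauchy mu (Hmu : prob_measure mu) F (om : nat -> R)
  (Hom : forall n x y, agree n x y -> Rabs (F x - F y) <= om n) n j :
  Rabs (riemann_sum mu F (n + j) - riemann_sum mu F n) <= om n.
Proof. rewrite !riemann_SW, SW_app.
  rewrite (SW_ext n (fun w => mu w * F (ext w)) (fun u => SW j (fun w => mu (u ++ w) * F (ext u)))).
  2:{ intro u. rewrite (SW_ext j _ (fun w => F (ext u) * mu (u ++ w))) by (intros; ring).
      rewrite SW_scal, mu_sum; auto; ring. }
  rewrite <- SW_minus.
  rewrite (SW_ext n _ (fun u => SW j (fun w => mu (u ++ w) * (F (ext (u ++ w)) - F (ext u))))).
  2:{ intro u. rewrite <- SW_minus. apply SW_ext; intros; ring. }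
  apply Rle_trans with (SW n (fun u => om n * mu u)).
  - apply SW_abs. intros u Hu.
    apply Rle_trans with (SW j (fun w => om n * mu (u ++ w))).
    + apply SW_abs. intros w _. rewrite Rabs_mult. destruct Hmu as [Hp _].
      rewrite (Rabs_right (mu (u ++ w))) by (apply Rle_ge, Hp). rewrite Rmult_comm.
      apply Rmult_le_compat_r; auto. apply Hom. rewrite <- Hu. apply agree_ext_app.
    + rewrite SW_scal, mu_sum; auto; lra.
  - rewrite SW_scal, mu_total; auto; lra.
Qed.

Lemma integral_exists mu (Hmu : prob_measure mu) F (om : nat -> R)
  (Hom : forall n x y, agree n x y -> Rabs (F x - F y) <= om n) (Hom0 : Un_cv om 0) :
  { I | integral_is mu F I /\ forall n, Rabs (I - riemann_sum mu F n) <= om n }.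
Proof.
  assert (Hc : Cauchy_crit (riemann_sum mu F)).
  { intros e He. destruct (Hom0 (e/2)) as [N HN]; [lra|]. exists N. intros a b Ha Hb.
    specialize (HN N (le_n N)). unfold R_dist in *. rewrite Rminus_0_r in HN.
    apply Rabs_lt_inv in HN.
    pose proof (riemann_cauchy mu Hmu F om Hom N (a - N)) as Ea. pose proof (riemann_cauchy mu Hmu F om Hom N (b - N)) as Eb.
    replace (N + (a - N))%nat with a in Ea by lia. replace (N + (b - N))%nat with b in Eb by lia.
    apply Rabs_le_inv in Ea. apply Rabs_le_inv in Eb. apply Rabs_def1; lra. }
  destruct (R_complete _ Hc) as [I HI]. exists I. split; auto.
  intro n. apply Rabs_le. split.
  - apply (lim_ge_const_ev (fun j => riemann_sum mu F (n + j) - riemann_sum mu F n) _ _ 0).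
    + intros j _. pose proof (riemann_cauchy mu Hmu F om Hom n j) as E. apply Rabs_le_inv in E. lra.
    + apply CV_minus. intros e He. destruct (HI e He) as [N HN]. exists N. intros; apply HN; lia. apply Un_cv_const.
  - apply (lim_le_const_ev (fun j => riemann_sum mu F (n + j) - riemann_sum mu F n) _ _ 0).
    + intros j _. pose proof (riemann_cauchy mu Hmu F om Hom n j) as E. apply Rabs_le_inv in E. lra.
    + apply CV_minus. intros e He. destruct (HI e He) as [N HN]. exists N. intros; apply HN; lia. apply Un_cv_const.
Qed.

Lemma riemann_shift mu (Hmu : inv_prob mu) F n :
  riemann_sum mu (fun z => F (shift z)) (S n) = riemann_sum mu F n.
Proof. rewrite !riemann_SW, SW_cons. apply SW_ext. intro w. rewrite !shift_ext.
  destruct Hmu as [_ Hinv]. rewrite (Hinv w). ring. Qed.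

Lemma riemann_const mu (Hmu : prob_measure mu) c n : riemann_sum mu (fun _ => c) n = c.
Proof. rewrite riemann_SW. rewrite (SW_ext _ _ (fun w => c * mu w)) by (intros; ring).
  rewrite SW_scal, mu_total; auto; ring. Qed.

Lemma riemann_plus mu F G n : riemann_sum mu (fun z => F z + G z) n = riemann_sum mu F n + riemann_sum mu G n.
Proof. rewrite !riemann_SW, <- SW_plus. apply SW_ext; intros; ring. Qed.
Lemma riemann_minus mu F G n : riemann_sum mu (fun z => F z - G z) n = riemann_sum mu F n - riemann_sum mu G n.
Proof. rewrite !riemann_SW, <- SW_minus. apply SW_ext; intros; ring. Qed.

Lemma zero_on_support mu (Hmu : prob_measure mu) g (om : nat -> R)
  (Hom : forall n x y, agree n x y -> Rabs (g x - g y) <= om n) (Hom0 : Un_cv om 0)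
  (Hg : forall z, 0 <= g z) (Hint : Un_cv (riemann_sum mu g) 0) x :
  in_support mu x -> g x = 0.
Proof. intros Hs. destruct (Rle_dec (g x) 0) as [Hle|Hgt]. specialize (Hg x); lra. exfalso.
  apply Rnot_le_lt in Hgt. destruct (Hom0 (g x / 2)) as [m Hm]; [lra|].
  specialize (Hm m (le_n m)). unfold R_dist in Hm. rewrite Rminus_0_r in Hm. apply Rabs_lt_inv in Hm.
  set (c := mu (prefix m x) * (g x / 2)). assert (Hc : 0 < c) by (unfold c; specialize (Hs m); nra).
  assert (Hb : forall j, c <= riemann_sum mu g (m + j)).
  { intro j. rewrite riemann_SW, SW_app.
    apply Rle_trans with (SW j (fun w => mu (prefix m x ++ w) * g (ext (prefix m x ++ w)))).
    - apply Rle_trans with (SW j (fun w => (g x / 2) * mu (prefix m x ++ w))).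
      + rewrite SW_scal, mu_sum; auto. unfold c; lra.
      + apply SW_le. intro w. destruct Hmu as [Hp _]. specialize (Hp (prefix m x ++ w)).
        assert (g x / 2 <= g (ext (prefix m x ++ w))).
        { assert (agree m (ext (prefix m x ++ w)) x).
          { apply agree_trans with (ext (prefix m x)). rewrite <- (length_prefix m x) at 1. apply agree_ext_app.
            apply agree_ext_prefix. }
          specialize (Hom m _ _ H). apply Rabs_le_inv in Hom. lra. }
        nra.
    - apply (SW_term m (fun u => SW j (fun w => mu (u ++ w) * g (ext (u ++ w))))).
      intro u. apply SW_nonneg. intro w. destruct Hmu as [Hp _]. specialize (Hp (u ++ w)). specialize (Hg (ext (u ++ w))). nra. }
  assert (c <= 0). { apply (lim_ge_const_ev (fun j => riemann_sum mu g (m + j)) 0 c 0).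
    intros; apply Hb. intros e He. destruct (Hint e He) as [N HN]. exists N. intros; apply HN; lia. }
  lra.
Qed.

Lemma sumN_minus n F G : sumN n (fun i => F i - G i) = sumN n F - sumN n G.
Proof. induction n; simpl; [lra| rewrite IHn; lra]. Qed.

Definition ind (z : Sigma) (w : list bool) : R :=
  if list_eq_dec Bool.bool_dec (prefix (length w) z) w then 1 else 0.

Lemma ind_01 z w : 0 <= ind z w <= 1.
Proof. unfold ind; destruct list_eq_dec; lra. Qed.

Lemma ind_nil z : ind z [] = 1.
Proof. unfold ind; destruct list_eq_dec as [_|n]; auto. exfalso; apply n; reflexivity. Qed.

Lemma ind_one z w : ind z w = 1 -> prefix (length w) z = w.
Proof. unfold ind; destruct list_eq_dec; auto. intros; lra. Qed.

Lemma ind_snoc z w b : ind z (w ++ [b]) = if Bool.eqb (z (length w)) b then ind z w else 0.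
Proof. unfold ind. rewrite length_app. simpl length. rewrite Nat.add_1_r, prefix_S.
  destruct (list_eq_dec Bool.bool_dec (prefix (length w) z ++ [z (length w)]) (w ++ [b])) as [e|n];
  destruct (list_eq_dec Bool.bool_dec (prefix (length w) z) w) as [e'|n'].
  - apply app_inj_tail in e. destruct e as [_ ->]. rewrite Bool.eqb_reflx; auto.
  - apply app_inj_tail in e. tauto.
  - destruct (Bool.eqb (z (length w)) b) eqn:E; auto. apply Bool.eqb_prop in E. subst. exfalso; apply n; rewrite e'; auto.
  - destruct (Bool.eqb _ _); auto. Qed.

Lemma ind_snoc_sum z w : ind z (w ++ [false]) + ind z (w ++ [true]) = ind z w.
Proof. rewrite !ind_snoc. destruct (z (length w)); simpl; ring. Qed.

Lemma ind_cons z b w : ind z (b :: w) = if Bool.eqb (z 0%nat) b then ind (shift z) w else 0.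
Proof. unfold ind. simpl length. rewrite prefix_S_front.
  destruct (list_eq_dec Bool.bool_dec (z 0%nat :: prefix (length w) (shift z)) (b :: w)) as [e|n];
  destruct (list_eq_dec Bool.bool_dec (prefix (length w) (shift z)) w) as [e'|n'].
  - injection e; intros _ ->. rewrite Bool.eqb_reflx; auto.
  - injection e; tauto.
  - destruct (Bool.eqb (z 0%nat) b) eqn:E; auto. apply Bool.eqb_prop in E. exfalso; apply n; rewrite E, e'; auto.
  - destruct (Bool.eqb _ _); auto. Qed.

Lemma ind_cons_sum z w : ind z (false :: w) + ind z (true :: w) = ind (shift z) w.
Proof. rewrite !ind_cons. destruct (z 0%nat); simpl; ring. Qed.

Lemma SW_ind n z G : SW n (fun w => ind z w * G w) = G (prefix n z).
Proof. revert G; induction n; intro G.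
  - unfold SW; simpl; unfold sumL; simpl. rewrite ind_nil. change (prefix 0 z) with (@nil bool). ring.
  - rewrite SW_snoc. rewrite (SW_ext_in n _ (fun w => ind z w * G (w ++ [z n]))).
    + rewrite IHn, prefix_S; auto.
    + intros w Hw. apply words_length in Hw. rewrite !ind_snoc, Hw.
      destruct (z n); simpl; ring. Qed.

Definition nuA (N : nat) (g : nat -> Sigma) (w : list bool) : R :=
  / INR N * sumN N (fun i => ind (g i) w).

Lemma nuA_nonneg N g w : 0 <= nuA N g w.
Proof. unfold nuA. destruct N. simpl; lra. apply Rmult_le_pos.
  left; apply Rinv_0_lt_compat, lt_0_INR; lia.
  apply Rle_trans with (sumN (S N) (fun _ => 0)). rewrite sumN_const; lra.
  apply sumN_le; intros; apply ind_01. Qed.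

Lemma nuA_prob N g : (1 <= N)%nat -> prob_measure (nuA N g).
Proof. intros HN. split; [apply nuA_nonneg|split].
  - unfold nuA. rewrite (sumN_ext _ _ (fun _ => 1)) by (intros; apply ind_nil).
    rewrite sumN_const. field. apply not_0_INR; lia.
  - intro w. unfold nuA. rewrite <- Rmult_plus_distr_l, <- sumN_plus. f_equal.
    apply sumN_ext. intros. symmetry; apply ind_snoc_sum. Qed.

Lemma riemann_nuA N g F n :
  riemann_sum (nuA N g) F n = / INR N * sumN N (fun i => F (ext (prefix n (g i)))).
Proof. rewrite riemann_SW. unfold nuA.
  rewrite (SW_ext n _ (fun w => / INR N * sumN N (fun i => ind (g i) w * F (ext w)))).
  2:{ intro w. rewrite Rmult_assoc. f_equal. rewrite Rmult_comm, <- sumN_scal. apply sumN_ext; intros; ring. }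
  rewrite SW_scal, SW_sumN. f_equal. apply sumN_ext. intros. apply (SW_ind n (g i) (fun w => F (ext w))). Qed.

Lemma riemann_nuA_close N g F (om : nat -> R) n :
  (1 <= N)%nat -> (forall n x y, agree n x y -> Rabs (F x - F y) <= om n) ->
  Rabs (riemann_sum (nuA N g) F n - / INR N * sumN N (fun i => F (g i))) <= om n.
Proof. intros HN Hom. rewrite riemann_nuA.
  assert (HI : 0 < / INR N) by (apply Rinv_0_lt_compat, lt_0_INR; lia).
  rewrite <- Rmult_minus_distr_l, Rabs_mult, Rabs_right by lra.
  assert (Rabs (sumN N (fun i => F (ext (prefix n (g i)))) - sumN N (fun i => F (g i))) <= INR N * om n).
  { rewrite <- sumN_const. replace (sumN N (fun i => F (ext (prefix n (g i)))) - sumN N (fun i => F (g i)))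
      with (sumN N (fun i => F (ext (prefix n (g i))) - F (g i))).
    2:{ apply sumN_minus. }
    apply Rabs_le. split.
    - apply Rle_trans with (sumN N (fun _ => - om n)).
      rewrite !sumN_const; lra. apply sumN_le. intros. pose proof (Hom n _ _ (agree_ext_prefix n (g i))) as E.
      apply Rabs_le_inv in E; lra.
    - apply sumN_le. intros. pose proof (Hom n _ _ (agree_ext_prefix n (g i))) as E.
      apply Rabs_le_inv in E; lra. }
  apply Rle_trans with (/ INR N * (INR N * om n)). apply Rmult_le_compat_l; lra.
  right. field. apply not_0_INR; lia. Qed.

Lemma nuA_periodic_inv k p : (1 <= k)%nat -> shiftn k p = p -> inv_prob (nuA k (fun i => shiftn i p)).
Proof. intros Hk Hp. split. apply nuA_prob; auto. intro w. unfold nuA.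
  rewrite <- Rmult_plus_distr_l, <- sumN_plus. f_equal.
  rewrite (sumN_ext _ (fun i => ind (shiftn i p) (false :: w) + ind (shiftn i p) (true :: w)) (fun i => ind (shiftn (S i) p) w)).
  2:{ intros. rewrite ind_cons_sum, shift_shiftn; auto. }
  rewrite (sumN_shift k (fun i => ind (shiftn i p) w)). rewrite Hp. change (shiftn 0 p) with p. ring. Qed.

Section Greedy.
Variable Q : list bool -> Prop.
Hypothesis Q0 : Q [].
Hypothesis QS : forall w, Q w -> Q (w ++ [true]) \/ Q (w ++ [false]).

Fixpoint gp (n : nat) : list bool :=
  match n with O => [] | S m => gp m ++ [if excluded_middle_informative (Q (gp m ++ [true])) then true else false] end.

Lemma gp_Q n : Q (gp n).
Proof. induction n; simpl; auto. destruct excluded_middle_informative; auto.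
  destruct (QS _ IHn); tauto. Qed.

Lemma gp_len n : length (gp n) = n.
Proof. induction n; simpl; auto. rewrite length_app, IHn; simpl; lia. Qed.

Lemma gp_ext m n : (m <= n)%nat -> exists t, gp n = gp m ++ t.
Proof. induction 1. exists []; rewrite app_nil_r; auto. destruct IHle as [t Ht]. simpl. rewrite Ht.
  eexists. rewrite <- app_assoc. reflexivity. Qed.

Definition gc : Sigma := fun j => nth j (gp (S j)) false.

Lemma gc_prefix n : prefix n gc = gp n.
Proof. apply nth_ext with (d := false) (d' := false). rewrite length_prefix, gp_len; auto.
  intros j Hj. rewrite length_prefix in Hj. rewrite nth_prefix by auto. unfold gc.
  destruct (gp_ext (S j) n Hj) as [t Ht]. rewrite Ht, app_nth1; auto. rewrite gp_len; lia. Qed.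

End Greedy.

Lemma greedy (Q : list bool -> Prop) : Q [] -> (forall w, Q w -> Q (w ++ [true]) \/ Q (w ++ [false])) ->
  exists c, forall n, Q (prefix n c).
Proof. intros Q0 QS. exists (gc Q). intro n. rewrite gc_prefix. apply gp_Q; auto. Qed.

Definition Inf (P : nat -> Prop) := forall N, exists k, (N <= k)%nat /\ P k.

Lemma compact (s : nat -> Sigma) : exists c, forall n N, exists k, (N <= k)%nat /\ agree n (s k) c.
Proof.
  destruct (greedy (fun w => Inf (fun k => prefix (length w) (s k) = w))) as [c Hc].
  - intro N. exists N. split; auto.
  - intros w Hw. destruct (classic (Inf (fun k => prefix (length (w ++ [true])) (s k) = w ++ [true]))) as [Ht|Ht]; [left; auto|right].
    apply not_all_ex_not in Ht. destruct Ht as [N0 HN0].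
    intro N. destruct (Hw (N + N0)%nat) as [k [Hk Hpk]]. exists k. split; [lia|].
    rewrite length_app. simpl length. rewrite Nat.add_1_r, prefix_S, Hpk. f_equal.
    destruct (s k (length w)) eqn:E; auto. exfalso. apply HN0. exists k. split; [lia|].
    rewrite length_app. simpl length. rewrite Nat.add_1_r, prefix_S, Hpk, E; auto.
  - exists c. intros n N. destruct (Hc n N) as [k [Hk Hp]]. exists k. split; auto.
    apply agree_prefix. rewrite length_prefix in Hp; auto. Qed.

Lemma unif_cont F : continuous_S F -> forall eps, 0 < eps -> exists q, forall x y, agree q x y -> Rabs (F x - F y) < eps.
Proof. intros Hc eps He. apply NNPP. intro Hn.
  assert (Hall : forall q, exists p : Sigma * Sigma, agree q (fst p) (snd p) /\ eps <= Rabs (F (fst p) - F (snd p))).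
  { intro q. apply NNPP. intro Hq. apply Hn. exists q. intros x y Ha. apply Rnot_le_lt. intro Hle.
    apply Hq. exists (x, y). simpl; auto. }
  set (ps := fun q => proj1_sig (constructive_indefinite_description _ (Hall q))).
  assert (Hps : forall q, agree q (fst (ps q)) (snd (ps q)) /\ eps <= Rabs (F (fst (ps q)) - F (snd (ps q)))).
  { intro q. exact (proj2_sig (constructive_indefinite_description _ (Hall q))). }
  destruct (compact (fun q => fst (ps q))) as [c Hcl].
  destruct (Hc c (eps / 2)) as [n Hn2]; [lra|].
  destruct (Hcl n n) as [k [Hk Hak]].
  destruct (Hps k) as [Hxy Hge].
  pose proof (Hn2 _ (agree_sym _ _ _ Hak)) as E1.
  assert (agree n c (snd (ps k))).
  { apply agree_trans with (fst (ps k)). apply agree_sym; auto. apply agree_mono with k; auto. }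
  pose proof (Hn2 _ H) as E2. apply Rabs_lt_inv in E1. apply Rabs_lt_inv in E2.
  assert (Rabs (F (fst (ps k)) - F (snd (ps k))) < eps) by (apply Rabs_def1; lra). lra.
Qed.

Fixpoint remd (t : R) (j : nat) : R :=
  match j with O => t | S i => 2 * remd t i - (if Rle_dec 1 (2 * remd t i) then 1 else 0) end.
Definition dig (t : R) (j : nat) : bool := if Rle_dec 1 (2 * remd t j) then true else false.
Definition bitR (b : bool) : R := if b then 1 else 0.
Definition partial (d : nat -> bool) (J : nat) : R := sumN J (fun j => bitR (d j) * (/ 2) ^ (S j)).

Lemma remd_bounds t : 0 <= t <= 1 -> forall j, 0 <= remd t j <= 1.
Proof. intros Ht j; induction j; simpl; auto. destruct Rle_dec; lra. Qed.

Lemma dig_spec t : 0 <= t <= 1 -> forall J, t = partial (dig t) J + remd t J * (/ 2) ^ J.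
Proof. intros Ht J; induction J. unfold partial; simpl; ring.
  unfold partial in *; simpl sumN. rewrite IHJ at 1. unfold dig, bitR. simpl remd. simpl pow.
  destruct (Rle_dec 1 (2 * remd t J)); field. Qed.

Lemma partial_step d J J' : (J <= J')%nat -> partial d J <= partial d J' <= partial d J + (/ 2) ^ J - (/ 2) ^ J'.
Proof. induction 1. lra. unfold partial in *; cbn [sumN]. change ((/2)^(S m)) with (/2 * (/2)^m).
  assert (0 <= bitR (d m) <= 1) by (unfold bitR; destruct (d m); lra).
  assert (0 < (/2) ^ m) by (apply pow_lt; lra).
  set (p := (/2) ^ m) in *. assert (0 <= bitR (d m) * (/ 2 * p) <= / 2 * p) by nra. lra. Qed.

Lemma partial_ub d J : partial d J <= 1.
Proof. pose proof (partial_step d 0 J ltac:(lia)). assert (partial d 0 = 0) by reflexivity. rewrite pow_O in H.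
  assert (0 < (/2) ^ J) by (apply pow_lt; lra). lra. Qed.

Lemma partial_growing d : Un_growing (partial d).
Proof. intro n. apply (partial_step d n (S n)); lia. Qed.
Lemma partial_has_ub d : has_ub (partial d).
Proof. exists 1. intros r [i ->]. apply partial_ub. Qed.

Definition decode (d : nat -> bool) : R := proj1_sig (growing_cv _ (partial_growing d) (partial_has_ub d)).
Lemma decode_cv d : Un_cv (partial d) (decode d).
Proof. exact (proj2_sig (growing_cv _ (partial_growing d) (partial_has_ub d))). Qed.

Lemma decode_bounds d J : partial d J <= decode d <= partial d J + (/ 2) ^ J.
Proof. split.
  - apply (lim_ge_const_ev (partial d) _ _ J); [|apply decode_cv]. intros; apply partial_step; auto.
  - apply (lim_le_const_ev (partial d) _ _ J); [|apply decode_cv]. intros n Hn.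
    pose proof (partial_step d J n Hn). assert (0 < (/2) ^ n) by (apply pow_lt; lra). lra. Qed.

Lemma decode_close t d J : 0 <= t <= 1 -> (forall j, (j < J)%nat -> d j = dig t j) -> Rabs (t - decode d) <= (/ 2) ^ J.
Proof. intros Ht Hd. pose proof (dig_spec t Ht J). pose proof (remd_bounds t Ht J).
  pose proof (decode_bounds d J). assert (partial d J = partial (dig t) J).
  { unfold partial. apply sumN_ext. intros; rewrite Hd; auto. }
  assert (0 < (/2) ^ J) by (apply pow_lt; lra). apply Rabs_le. nra. Qed.

Definition bn (b : bool) : nat := if b then 1%nat else 0%nat.
Fixpoint enc (w : list bool) : nat := match w with [] => 0%nat | b :: w' => S (to_nat (bn b, enc w')) end.
Fixpoint decf (fuel n : nat) : list bool :=
  match fuel with O => [] | S f => match n with O => [] | S m => Nat.eqb (fst (of_nat m)) 1 :: decf f (snd (of_nat m)) end end.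
Definition dec (n : nat) : list bool := decf (S n) n.

Lemma decf_enc w : forall fuel, (enc w < fuel)%nat -> decf fuel (enc w) = w.
Proof. induction w as [|b w IH]; intros fuel Hf.
  - destruct fuel; [cbn [enc] in Hf; lia| reflexivity].
  - destruct fuel as [|f]; [cbn [enc] in Hf; lia|]. cbn [enc decf]. rewrite cancel_of_to. cbn [fst snd]. f_equal.
    destruct b; reflexivity. apply IH. cbn [enc] in Hf. pose proof (to_nat_non_decreasing (bn b) (enc w)). lia. Qed.

Lemma dec_enc w : dec (enc w) = w.
Proof. apply decf_enc; lia. Qed.

Lemma in_list_max x L : In x L -> (x <= list_max L)%nat.
Proof. intros Hin. assert (Forall (fun k => k <= list_max L)%nat L) by (apply list_max_le; auto).
  rewrite Forall_forall in H; auto. Qed.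

Lemma measure_cluster (nu : nat -> list bool -> R) : (forall k w, 0 <= nu k w <= 1) ->
  exists mu, forall M eps N, 0 < eps -> exists k, (N <= k)%nat /\
    forall w, (length w <= M)%nat -> Rabs (nu k w - mu w) < eps.
Proof. intros Hnu.
  set (codek := fun k n => dig (nu k (dec (fst (of_nat n)))) (snd (of_nat n))).
  destruct (compact codek) as [c Hc].
  exists (fun w => decode (fun j => c (to_nat (enc w, j)))).
  intros M eps N He.
  destruct (pow_lt_1_zero (/2) ltac:(rewrite Rabs_right; lra) eps He) as [J HJ].
  specialize (HJ J (le_n J)). rewrite Rabs_right in HJ by (left; apply pow_lt; lra).
  set (Fl := flat_map (fun m => flat_map (fun w => map (fun j => to_nat (enc w, j)) (seq 0 J)) (words m)) (seq 0 (S M))).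
  destruct (Hc (S (list_max Fl)) N) as [k [Hk Hag]]. exists k. split; auto.
  intros w Hw. eapply Rle_lt_trans; [|apply HJ]. apply decode_close; auto.
  intros j Hj. assert (Hin : In (to_nat (enc w, j)) Fl).
  { unfold Fl. apply in_flat_map. exists (length w). split. apply in_seq; lia.
    apply in_flat_map. exists w. split. apply in_words. apply (in_map (fun j => to_nat (enc w, j))). apply in_seq; lia. }
  apply in_list_max in Hin. rewrite <- (Hag (to_nat (enc w, j))) by lia. unfold codek. rewrite cancel_of_to. simpl. rewrite dec_enc. auto.
Qed.

Section Main.
Variables (H : Sigma -> R) (Hbar : R) (v : nat -> R) (l : R).
Hypothesis Hv : forall n, var_is H n (v n).
Hypothesis Hl : Un_cv (fun N => sum_f_R0 v N) l.

Definition T (m : nat) : R := l - sum_f_R0 v m.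
Notation B := (birkhoff H Hbar).

Lemma v_nonneg n : 0 <= v n.
Proof. destruct (Hv n) as [Hu _]. apply Hu. exists (fun _ => false), (fun _ => false). split.
  apply agree_refl. rewrite Rminus_diag, Rabs_R0; auto. Qed.

Lemma var_le n x y : agree n x y -> Rabs (H x - H y) <= v n.
Proof. intros. destruct (Hv n) as [Hu _]. apply Hu. exists x, y; auto. Qed.

Lemma partial_le N : sum_f_R0 v N <= l.
Proof. apply sum_incr; auto. apply v_nonneg. Qed.

Lemma T_nonneg m : 0 <= T m.
Proof. unfold T; pose proof (partial_le m); lra. Qed.

Lemma T_S m : T (S m) = T m - v (S m).
Proof. unfold T; simpl; ring. Qed.

Lemma T_mono m n : (m <= n)%nat -> T n <= T m.
Proof. induction 1; [lra|]. rewrite T_S. pose proof (v_nonneg (S m0)); lra. Qed.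

Lemma T_cv0 : Un_cv T 0.
Proof. intros e He. destruct (Hl e He) as [N HN]. exists N. intros n Hn. specialize (HN n Hn).
  unfold R_dist, T in *. rewrite Rabs_minus_sym in HN. rewrite Rminus_0_r. auto. Qed.

Lemma v_le_T m : v (S m) <= T m.
Proof. pose proof (T_nonneg (S m)). rewrite T_S in H0. lra. Qed.

Lemma v_cv0 : Un_cv v 0.
Proof. apply Un_cv_unshift. intros e He. destruct (T_cv0 e He) as [N HN]. exists N. intros n Hn.
  specialize (HN n Hn). unfold R_dist in *. rewrite Rminus_0_r in *.
  pose proof (v_le_T n). pose proof (v_nonneg (S n)). pose proof (T_nonneg n).
  rewrite Rabs_right in * by lra. lra. Qed.

Lemma tailsum m k : sumN k (fun i => v (m + 1 + i)%nat) <= T m.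
Proof. assert (E : sum_f_R0 v (m + k) = sum_f_R0 v m + sumN k (fun i => v (m + 1 + i)%nat)).
  { induction k. rewrite Nat.add_0_r; simpl; ring. rewrite Nat.add_succ_r. simpl. rewrite IHk.
    replace (S (m + k)) with (m + 1 + k)%nat by lia. ring. }
  pose proof (partial_le (m + k)). unfold T. lra. Qed.

Lemma bowen0 k : forall m z z', agree (k + m) z z' ->
  Rabs (B z k - B z' k) <= sumN k (fun i => v (m + 1 + i)%nat).
Proof. induction k; intros m z z' Ha. simpl. rewrite Rminus_diag, Rabs_R0; lra.
  rewrite !birkhoff_front. simpl (sumN (S k) _).
  assert (Ha' : agree (k + m) (shift z) (shift z')) by (apply agree_shift; replace (S (k + m)) with (S k + m)%nat by lia; auto).
  pose proof (IHk m _ _ Ha') as E1.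
  pose proof (var_le _ _ _ Ha) as E2.
  replace (S k + m)%nat with (m + 1 + k)%nat in E2 by lia.
  apply Rabs_le_inv in E1. apply Rabs_le_inv in E2. apply Rabs_le. lra. Qed.

Lemma bowen k m z z' : agree (k + m) z z' -> Rabs (B z k - B z' k) <= T m.
Proof. intros. eapply Rle_trans. apply (bowen0 k m z z'); auto. apply tailsum. Qed.

Hypothesis HHbar : Hbar_is H Hbar.

Lemma Hbar_le mu I : inv_prob mu -> integral_is mu H I -> Hbar <= I.
Proof. intros. apply (is_inf_le _ _ _ HHbar). exists mu; auto. Qed.

Lemma lower_bound z k : - T 0 <= B z k.
Proof.
  destruct k as [|k]. simpl; pose proof (T_nonneg 0); lra.
  set (kk := S k). set (p := fun j => z (j mod kk)%nat).
  assert (Hp : shiftn kk p = p).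
  { apply functional_extensionality; intro j; unfold shiftn, p. f_equal.
    replace (kk + j)%nat with (j + 1 * kk)%nat by lia. apply Nat.Div0.mod_add. }
  assert (Hag : agree (kk + 0) z p).
  { intros j Hj. unfold p. rewrite Nat.mod_small by lia. auto. }
  assert (Hk : (1 <= kk)%nat) by (unfold kk; lia).
  set (mu := nuA kk (fun i => shiftn i p)).
  assert (Hinv : inv_prob mu) by (apply nuA_periodic_inv; auto).
  destruct (integral_exists mu (proj1 Hinv) H v var_le v_cv0) as [I [HI HIb]].
  assert (HbI : Hbar <= I) by (apply (Hbar_le mu); auto).
  set (avg := / INR kk * sumN kk (fun i => H (shiftn i p))).
  assert (Havg : Hbar <= avg).
  { apply le_eps. intros eps He. destruct (v_cv0 (eps/2)) as [n Hn]; [lra|].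
    specialize (Hn n (le_n n)). unfold R_dist in Hn. rewrite Rminus_0_r in Hn.
    pose proof (v_nonneg n). rewrite Rabs_right in Hn by lra.
    pose proof (HIb n) as E1. pose proof (riemann_nuA_close kk (fun i => shiftn i p) H v n Hk var_le) as E2.
    fold mu in E2. unfold avg. apply Rabs_le_inv in E1. apply Rabs_le_inv in E2. lra. }
  assert (HBp : 0 <= B p kk).
  { rewrite birkhoff_sumN, sumN_minus, sumN_const.
    assert (INR kk * Hbar <= INR kk * avg) by (apply Rmult_le_compat_l; auto; apply pos_INR).
    unfold avg in H0. rewrite <- Rmult_assoc, Rinv_r, Rmult_1_l in H0 by (apply not_0_INR; lia). lra. }
  pose proof (bowen kk 0 z p Hag) as E. apply Rabs_le_inv in E. fold kk. lra.
Qed.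

Notation f := (fun z => H z - Hbar).

Definition Eu y := fun r => exists k z, shiftn k z = y /\ r = B z k.
Lemma Eu_ne y : exists r, Eu y r.
Proof. exists 0, 0%nat, y. split; reflexivity. Qed.
Lemma Eu_lb y r : Eu y r -> - T 0 <= r.
Proof. intros [k [z [_ ->]]]. apply lower_bound. Qed.
Definition u y := proj1_sig (inf_exists (Eu y) (- T 0) (Eu_ne y) (Eu_lb y)).
Lemma u_inf y : is_inf (Eu y) (u y).
Proof. exact (proj2_sig (inf_exists (Eu y) (- T 0) (Eu_ne y) (Eu_lb y))). Qed.

Lemma u_le0 y : u y <= 0.
Proof. apply (is_inf_le _ _ _ (u_inf y)). exists 0%nat, y; split; reflexivity. Qed.
Lemma u_ge y : - T 0 <= u y.
Proof. apply (is_inf_ge _ _ _ (u_inf y)). apply Eu_lb. Qed.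

Lemma u_sub y : u (shift y) <= u y + (H y - Hbar).
Proof. assert (u (shift y) - (H y - Hbar) <= u y); [|lra].
  apply (is_inf_ge _ _ _ (u_inf y)). intros r [k [z [Hz ->]]].
  assert (u (shift y) <= B z (S k)).
  { apply (is_inf_le _ _ _ (u_inf (shift y))). exists (S k), z. split; auto.
    rewrite <- shift_shiftn, Hz; auto. }
  simpl in H0. rewrite Hz in H0. lra. Qed.

Lemma u_var1 n y y' : agree n y y' -> u y <= u y' + T n.
Proof. intros Ha. assert (u y - T n <= u y'); [|lra].
  apply (is_inf_ge _ _ _ (u_inf y')). intros r [k [z [Hz ->]]].
  set (z'' := cat (prefix k z) y).
  assert (u y <= B z'' k).
  { apply (is_inf_le _ _ _ (u_inf y)). exists k, z''. split; auto. apply shiftn_cat_prefix. }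
  assert (Hag : agree (k + n) z'' z).
  { apply agree_cat_prefix2. rewrite Hz; auto. }
  pose proof (bowen k n z'' z Hag) as E. apply Rabs_le_inv in E. lra. Qed.

Lemma u_var n y y' : agree n y y' -> Rabs (u y - u y') <= T n.
Proof. intros. apply Rabs_le. pose proof (u_var1 n y y' H0). pose proof (u_var1 n y' y (agree_sym _ _ _ H0)). lra. Qed.

Lemma u_var_shift n y y' : agree n y y' -> Rabs (u (shift y) - u (shift y')) <= T (pred n).
Proof. intros Ha. apply u_var. destruct n. apply agree_0. apply agree_shift; auto. Qed.

Definition gz z := H z - Hbar + u z - u (shift z).

Lemma gz_nonneg z : 0 <= gz z.
Proof. unfold gz. pose proof (u_sub z). lra. Qed.

Lemma T_pred_cv0 : Un_cv (fun n => T (pred n)) 0.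
Proof. apply Un_cv_unshift. simpl. apply T_cv0; auto. Qed.

Lemma gz_var n x y : agree n x y -> Rabs (gz x - gz y) <= v n + T n + T (pred n).
Proof. intros Ha. unfold gz. pose proof (var_le n x y Ha) as E1. pose proof (u_var n x y Ha) as E2.
  pose proof (u_var_shift n x y Ha) as E3. apply Rabs_le_inv in E1; apply Rabs_le_inv in E2; apply Rabs_le_inv in E3.
  apply Rabs_le; lra. Qed.

Lemma om_g_cv0 : Un_cv (fun n => v n + T n + T (pred n)) 0.
Proof. replace 0 with (0 + 0 + 0) by ring. apply CV_plus. apply CV_plus. apply v_cv0; auto. apply T_cv0; auto.
  apply T_pred_cv0. Qed.

Lemma support_shift mu : inv_prob mu -> forall z, in_support mu z -> in_support mu (shift z).
Proof. intros [[Hp _] Hinv] z Hs n. rewrite (Hinv (prefix n (shift z))).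
  pose proof (Hs (S n)) as E. rewrite prefix_S_front in E.
  pose proof (Hp (false :: prefix n (shift z))). pose proof (Hp (true :: prefix n (shift z))).
  destruct (z 0%nat); lra. Qed.

Lemma support_shiftn mu : inv_prob mu -> forall k z, in_support mu z -> in_support mu (shiftn k z).
Proof. intros Hmu k; induction k; intros z Hs; auto. rewrite <- shift_shiftn. apply support_shift; auto. Qed.

Lemma mather_bounded x : Mather H Hbar x -> forall k, B x k <= T 0.
Proof. intros [mu [[Hinv Hint] Hs]].
  assert (Hprob : prob_measure mu) by (apply Hinv).
  destruct (integral_exists mu Hprob u T u_var T_cv0) as [Iu [HIu _]].
  assert (HIus : Un_cv (riemann_sum mu (fun z => u (shift z))) Iu).
  { apply Un_cv_unshift. apply (Un_cv_ext (riemann_sum mu u)); auto. intro n. symmetry. apply riemann_shift; auto. }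
  assert (Hg0 : Un_cv (riemann_sum mu gz) 0).
  { apply (Un_cv_ext (fun n => riemann_sum mu H n - Hbar + riemann_sum mu u n - riemann_sum mu (fun z => u (shift z)) n)).
    - intro n. unfold gz. rewrite riemann_minus, riemann_plus, riemann_minus, riemann_const; auto.
    - replace 0 with (Hbar - Hbar + Iu - Iu) by ring. apply CV_minus; auto. apply CV_plus; auto.
      apply CV_minus; auto. apply Un_cv_const. }
  assert (Hz : forall i, gz (shiftn i x) = 0).
  { intro i. apply (zero_on_support mu Hprob gz _ gz_var om_g_cv0 gz_nonneg Hg0). apply support_shiftn; auto. }
  assert (HB : forall k, B x k = u (shiftn k x) - u x).
  { induction k. simpl. change (shiftn 0 x) with x. ring. simpl. rewrite IHk.
    specialize (Hz k). unfold gz in Hz. rewrite shift_shiftn in Hz. lra. }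
  intro k. rewrite HB. pose proof (u_le0 (shiftn k x)). pose proof (u_ge x). lra. Qed.

Section Peierls.
Variables (x : Sigma) (C : R).
Hypothesis Hx : forall k, B x k <= C.

Definition E (n p : nat) (y : Sigma) := fun r => exists k z, (n <= k)%nat /\ agree p z x /\ agree p (shiftn k z) y
                               /\ r = B z k.

Lemma E_witness n p y : E n p y (B (cat (prefix (n + p) x) y) (n + p)).
Proof. exists (n + p)%nat, (cat (prefix (n + p) x) y). split; [lia|]. split.
  apply agree_mono with (n + p)%nat; [lia|]. apply agree_cat_prefix. split; auto.
  rewrite shiftn_cat_prefix. apply agree_refl. Qed.

Lemma E_ne n p y : exists r, E n p y r.
Proof. eexists; apply E_witness. Qed.
Lemma E_lb n p y r : E n p y r -> - T 0 <= r.
Proof. intros [k [z [_ [_ [_ ->]]]]]. apply lower_bound. Qed.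

Definition s n p y := proj1_sig (inf_exists (E n p y) (- T 0) (E_ne n p y) (E_lb n p y)).
Lemma s_inf n p y : is_inf (E n p y) (s n p y).
Proof. exact (proj2_sig (inf_exists (E n p y) (- T 0) (E_ne n p y) (E_lb n p y))). Qed.

Lemma s_up n p y : s n p y <= C + T 0.
Proof. eapply Rle_trans. apply (is_inf_le _ _ _ (s_inf n p y)). apply E_witness.
  assert (Hag : agree (n + p + 0) (cat (prefix (n + p) x) y) x).
  { rewrite Nat.add_0_r. apply agree_cat_prefix. }
  pose proof (bowen _ _ _ _ Hag) as E1. apply Rabs_le_inv in E1. pose proof (Hx (n + p)%nat). lra. Qed.

Lemma s_mono_n n p y : s n p y <= s (S n) p y.
Proof. apply (is_inf_mono (E n p y) (E (S n) p y)); [|apply s_inf|apply s_inf]. intros r Hr.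
  destruct Hr as [k [z [Hk R]]]. exists k, z. split; auto. lia. Qed.

Lemma s_mono_p n p y : s n p y <= s n (S p) y.
Proof. apply (is_inf_mono (E n p y) (E n (S p) y)); [|apply s_inf|apply s_inf]. intros r Hr.
  destruct Hr as [k [z [Hk [H1 [H2 H3]]]]]. exists k, z. repeat split; auto.
  apply agree_mono with (S p); auto. apply agree_mono with (S p); auto. Qed.

Lemma s_growing p y : Un_growing (fun n => s n p y).
Proof. intro n. apply s_mono_n. Qed.
Lemma s_ub p y : has_ub (fun n => s n p y).
Proof. exists (C + T 0). intros r [i ->]. apply s_up. Qed.

Definition L p y := proj1_sig (growing_cv _ (s_growing p y) (s_ub p y)).
Lemma L_cv p y : Un_cv (fun n => s n p y) (L p y).
Proof. exact (proj2_sig (growing_cv _ (s_growing p y) (s_ub p y))). Qed.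

Lemma L_up p y : L p y <= C + T 0.
Proof. apply (lim_le_const_ev _ _ _ 0 (fun n _ => s_up n p y) (L_cv p y)). Qed.

Lemma L_growing y : Un_growing (fun p => L p y).
Proof. intro p. apply (Rle_cv_lim (fun n => s_mono_p n p y) (L_cv p y) (L_cv (S p) y)). Qed.
Lemma L_ub y : has_ub (fun p => L p y).
Proof. exists (C + T 0). intros r [i ->]. apply L_up. Qed.

Definition h y := proj1_sig (growing_cv _ (L_growing y) (L_ub y)).
Lemma h_cv y : Un_cv (fun p => L p y) (h y).
Proof. exact (proj2_sig (growing_cv _ (L_growing y) (L_ub y))). Qed.

Lemma h_peierls y : peierls_is H Hbar x y (h y).
Proof. exists (fun n p => s n p y), (fun p => L p y). split; [|split].
  - intros n p. apply s_inf.
  - intro p. apply L_cv.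
  - apply h_cv. Qed.

Lemma s_var n0 N p y y' : (n0 <= p)%nat -> (p <= N)%nat -> agree n0 y y' -> s N p y <= s N p y' + T n0.
Proof. intros Hnp HpN Ha. assert (s N p y - T n0 <= s N p y'); [|lra].
  apply (is_inf_ge _ _ _ (s_inf N p y')). intros r [k [z [Hk [H1 [H2 ->]]]]].
  set (z'' := cat (prefix k z) y).
  assert (s N p y <= B z'' k).
  { apply (is_inf_le _ _ _ (s_inf N p y)). exists k, z''. repeat split; auto.
    - apply agree_trans with z; auto. apply agree_mono with k; [lia|]. apply agree_cat_prefix.
    - unfold z''. rewrite shiftn_cat_prefix. apply agree_refl. }
  assert (Hag : agree (k + n0) z'' z).
  { apply agree_cat_prefix2. apply agree_trans with y'; auto. apply agree_sym. apply agree_mono with p; auto. }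
  pose proof (bowen k n0 z'' z Hag) as E1. apply Rabs_le_inv in E1. lra. Qed.

Lemma L_var n0 p y y' : (n0 <= p)%nat -> agree n0 y y' -> L p y <= L p y' + T n0.
Proof. intros Hp Ha. apply (lim_le_ev (fun n => s n p y) (fun n => s n p y' + T n0) _ _ p).
  intros; apply s_var; auto. apply L_cv. apply CV_plus. apply L_cv. apply Un_cv_const. Qed.

Lemma h_var1 n0 y y' : agree n0 y y' -> h y <= h y' + T n0.
Proof. intros Ha. apply (lim_le_ev (fun p => L p y) (fun p => L p y' + T n0) _ _ n0).
  intros; apply L_var; auto. apply h_cv. apply CV_plus. apply h_cv. apply Un_cv_const. Qed.

Lemma h_var n0 y y' : agree n0 y y' -> Rabs (h y - h y') <= T n0.
Proof. intros. apply Rabs_le. pose proof (h_var1 n0 y y' H0). pose proof (h_var1 n0 y' y (agree_sym _ _ _ H0)). lra. Qed.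

Lemma s_sub n p a y : s (S n) p y <= s n (S p) (bcons a y) + (H (bcons a y) - Hbar) + v (S p).
Proof. assert (s (S n) p y - (H (bcons a y) - Hbar) - v (S p) <= s n (S p) (bcons a y)); [|lra].
  apply (is_inf_ge _ _ _ (s_inf n (S p) (bcons a y))). intros r [k [z [Hk [H1 [H2 ->]]]]].
  assert (s (S n) p y <= B z (S k)).
  { apply (is_inf_le _ _ _ (s_inf (S n) p y)). exists (S k), z. repeat split; auto. lia.
    apply agree_mono with (S p); auto. rewrite <- shift_shiftn. rewrite <- (shift_bcons a y). apply agree_shift; auto. }
  simpl in H0. pose proof (var_le _ _ _ H2) as E1. apply Rabs_le_inv in E1. lra. Qed.

Lemma L_sub p a y : L p y <= L (S p) (bcons a y) + (H (bcons a y) - Hbar) + v (S p).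
Proof. apply (lim_le_ev (fun n => s (S n) p y) (fun n => s n (S p) (bcons a y) + (H (bcons a y) - Hbar) + v (S p)) _ _ 0).
  - intros; apply s_sub.
  - apply (Un_cv_shift (fun n => s n p y)). apply L_cv.
  - apply CV_plus. apply CV_plus. apply L_cv. apply Un_cv_const. apply Un_cv_const. Qed.

Lemma h_sub a y : h y <= h (bcons a y) + (H (bcons a y) - Hbar).
Proof. apply (lim_le_ev (fun p => L p y) (fun p => L (S p) (bcons a y) + (H (bcons a y) - Hbar) + v (S p)) _ _ 0).
  - intros; apply L_sub.
  - apply h_cv.
  - replace (h (bcons a y) + (H (bcons a y) - Hbar)) with (h (bcons a y) + (H (bcons a y) - Hbar) + 0) by ring.
    apply CV_plus. apply CV_plus. apply (Un_cv_shift (fun p => L p (bcons a y))). apply h_cv. apply Un_cv_const.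
    apply (Un_cv_shift v). apply v_cv0. Qed.

Definition mn (F : Sigma -> R) y := Rmin (F (bcons false y) + (H (bcons false y) - Hbar)) (F (bcons true y) + (H (bcons true y) - Hbar)).

Lemma s_cal n p y : mn (s n p) y - v (S p) <= s (S n) p y.
Proof. apply (is_inf_ge _ _ _ (s_inf (S n) p y)). intros r [k [z [Hk [H1 [H2 ->]]]]].
  destruct k as [|k']; [lia|]. set (a := z k'). set (q := shiftn k' z).
  assert (Hq : agree (S p) q (bcons a y)).
  { intros [|j] Hj; unfold q, a, shiftn; simpl. f_equal; lia.
    rewrite <- (H2 j) by lia. unfold shiftn. f_equal; lia. }
  assert (s n p (bcons a y) <= B z k').
  { apply (is_inf_le _ _ _ (s_inf n p (bcons a y))). exists k', z. repeat split; auto. lia.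
    apply agree_mono with (S p); auto. }
  simpl. fold q. pose proof (var_le _ _ _ Hq) as E1. apply Rabs_le_inv in E1.
  assert (mn (s n p) y <= s n p (bcons a y) + (H (bcons a y) - Hbar)).
  { unfold mn. destruct a. apply Rmin_r. apply Rmin_l. }
  lra. Qed.

Lemma L_cal p y : mn (L p) y - v (S p) <= L p y.
Proof. apply (lim_le_ev (fun n => mn (s n p) y - v (S p)) (fun n => s (S n) p y) _ _ 0).
  - intros; apply s_cal.
  - apply CV_minus. unfold mn. apply CV_min; apply CV_plus; try apply L_cv; apply Un_cv_const.
    apply Un_cv_const.
  - apply (Un_cv_shift (fun n => s n p y)). apply L_cv. Qed.

Lemma h_cal y : mn h y <= h y.
Proof. apply (lim_le_ev (fun p => mn (L p) y - v (S p)) (fun p => L p y) _ _ 0).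
  - intros; apply L_cal.
  - replace (mn h y) with (mn h y - 0) by ring. apply CV_minus.
    unfold mn. apply CV_min; apply CV_plus; try apply h_cv; apply Un_cv_const. apply (Un_cv_shift v). apply v_cv0.
  - apply h_cv. Qed.

Lemma h_cont : continuous_S h.
Proof. intros y eps He. destruct (T_cv0 eps He) as [n Hn]. exists n. intros y' Ha.
  specialize (Hn n (le_n n)). unfold R_dist in Hn. rewrite Rminus_0_r in Hn.
  pose proof (T_nonneg n). rewrite Rabs_right in Hn by lra. pose proof (h_var n y y' Ha). lra. Qed.

Lemma h_calibrated : calibrated H Hbar h.
Proof. split. apply h_cont. intro y. split.
  - intros x' Hx'. rewrite (bcons_shift x'), Hx'. pose proof (h_sub (x' 0%nat) y). lra.
  - pose proof (h_cal y). pose proof (h_sub false y). pose proof (h_sub true y). unfold mn in H0.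
    destruct (Rle_dec (h (bcons false y) + (H (bcons false y) - Hbar)) (h (bcons true y) + (H (bcons true y) - Hbar))).
    + exists (bcons false y). split; auto. rewrite Rmin_left in H0 by auto. lra.
    + exists (bcons true y). split; auto. rewrite Rmin_right in H0 by lra. lra. Qed.

End Peierls.

Lemma var_unique v' l' : (forall n, var_is H n (v' n)) -> Un_cv (fun N => sum_f_R0 v' N) l' -> v' = v /\ l' = l.
Proof. intros Hv' Hl'. assert (v' = v). { apply functional_extensionality; intro n. apply (is_lub_unique _ _ _ (Hv' n) (Hv n)). }
  subst. split; auto. apply (UL_sequence _ _ _ Hl' Hl). Qed.

Lemma in_K_of_var V : continuous_S V -> (forall n y y', agree n y y' -> Rabs (V y - V y') <= T n) -> in_K H V.
Proof. intros Hc Hb. split; auto. intros v' l' Hv' Hl' n _ y y' Ha. destruct (var_unique v' l' Hv' Hl'); subst.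
  apply Hb; auto. Qed.

Lemma part1_core x C : (forall k, B x k <= C) ->
  exists V : Sigma -> R, (forall y, peierls_is H Hbar x y (V y)) /\ in_K H V /\ calibrated H Hbar V.
Proof. intros Hx. exists (h x C Hx). split; [|split].
  - apply h_peierls.
  - apply in_K_of_var. apply h_cont. apply h_var.
  - apply h_calibrated. Qed.

Lemma eq_eps a b : (forall eps, 0 < eps -> Rabs (a - b) < eps) -> a = b.
Proof. intros He. apply Rle_antisym; apply le_eps; intros eps Hp; specialize (He eps Hp); apply Rabs_lt_inv in He; lra. Qed.

Lemma small_inv eps : 0 < eps -> exists N, (1 <= N)%nat /\ forall k, (N <= k)%nat -> / INR k < eps.
Proof. intros He. destruct (INR_unbounded (/ eps)) as [N HN]. exists (S N). split; [lia|]. intros k Hk.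
  assert (INR N < INR k) by (apply lt_INR; lia). assert (0 < / eps) by (apply Rinv_0_lt_compat; auto).
  assert (0 < INR k) by lra. assert (0 < INR N) by lra. apply Rinv_lt_contravar in HN. 2:{ apply Rmult_lt_0_compat; lra. }
  rewrite Rinv_inv in HN. apply Rlt_trans with (/ INR N); auto. apply Rinv_lt_contravar; auto.
  apply Rmult_lt_0_compat; lra. Qed.

Lemma nuA_le1 N g w : nuA N g w <= 1.
Proof. unfold nuA. destruct N. simpl. lra.
  assert (sumN (S N) (fun i => ind (g i) w) <= INR (S N)).
  { rewrite <- (Rmult_1_r (INR (S N))), <- sumN_const. apply sumN_le; intros; apply ind_01. }
  assert (0 < INR (S N)) by (apply lt_0_INR; lia).
  apply Rle_trans with (/ INR (S N) * INR (S N)). apply Rmult_le_compat_l; auto. left; apply Rinv_0_lt_compat; auto.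
  rewrite Rinv_l; lra. Qed.

Lemma sumN_bound k n (a : nat -> R) : (forall i, 0 <= a i <= 1) -> (forall i, (n <= S i)%nat -> a i = 0) -> sumN k a <= INR n.
Proof. intros H01 H0. assert (sumN k a <= INR (Nat.min k n)).
  { induction k. simpl; lra. simpl sumN. destruct (le_lt_dec n (S k)).
    - rewrite (H0 k l0). assert (INR (Nat.min k n) <= INR (Nat.min (S k) n)) by (apply le_INR; lia). lra.
    - replace (Nat.min (S k) n) with (S (Nat.min k n)) by lia. rewrite S_INR. specialize (H01 k). lra. }
  assert (INR (Nat.min k n) <= INR n) by (apply le_INR; lia). lra. Qed.

Section Cal.
Variable V : Sigma -> R.
Hypothesis HV : calibrated H Hbar V.

Lemma V_sub x : V (shift x) + Hbar <= V x + H x.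
Proof. destruct HV as [_ Hc]. apply (proj1 (Hc (shift x))). auto. Qed.

Lemma V_var_aux eps q (Hq : forall x y, agree q x y -> Rabs (V x - V y) < eps) :
  forall m n y y', (q <= n + m)%nat -> agree n y y' -> V y' - V y <= sumN m (fun i => v (n + 1 + i)%nat) + eps.
Proof. induction m; intros n y y' Hqn Ha.
  - simpl. assert (agree q y y') by (apply agree_mono with n; auto; lia). specialize (Hq _ _ H0).
    apply Rabs_lt_inv in Hq. lra.
  - destruct HV as [_ Hc]. destruct (proj2 (Hc y)) as [x [Hxs Hxe]].
    set (a := x 0%nat). set (x' := bcons a y').
    assert (Hx : x = bcons a y) by (rewrite (bcons_shift x), Hxs; auto).
    pose proof (V_sub x') as E1. replace (shift x') with y' in E1 by reflexivity.
    assert (Hag : agree (S n) x x') by (rewrite Hx; apply agree_bcons; auto).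
    pose proof (IHm (S n) x x' ltac:(lia) Hag) as E2.
    pose proof (var_le _ _ _ Hag) as E3. apply Rabs_le_inv in E3.
    rewrite sumN_front. replace (n + 1 + 0)%nat with (S n) by lia.
    rewrite (sumN_ext m (fun i => v (n + 1 + S i)%nat) (fun i => v (S n + 1 + i)%nat)) by (intros; f_equal; lia).
    lra. Qed.

Lemma V_var n y y' : agree n y y' -> Rabs (V y - V y') <= T n.
Proof. intros Ha. destruct HV as [Hcont _].
  assert (Hone : forall a b, agree n a b -> V b - V a <= T n).
  { intros a b Hab. apply le_eps. intros eps He. destruct (unif_cont V Hcont eps He) as [q Hq].
    pose proof (V_var_aux eps q Hq q n a b ltac:(lia) Hab). pose proof (tailsum n q). lra. }
  apply Rabs_le. pose proof (Hone _ _ Ha). pose proof (Hone _ _ (agree_sym _ _ _ Ha)). lra. Qed.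

Lemma V_in_K : in_K H V.
Proof. apply in_K_of_var. apply HV. apply V_var. Qed.

Lemma V_birk z k : V (shiftn k z) <= V z + B z k.
Proof. induction k. simpl. change (shiftn 0 z) with z. lra.
  pose proof (V_sub (shiftn k z)). rewrite shift_shiftn in H0. simpl. lra. Qed.

Lemma V_le_h x C (Hx : forall k, B x k <= C) y : V y <= V x + h x C Hx y.
Proof.
  assert (Hs : forall n p, V y - V x - 2 * T p <= s x n p y).
  { intros n p. apply (is_inf_ge _ _ _ (s_inf x n p y)). intros r [k [z [Hk [H1 [H2 ->]]]]].
    pose proof (V_birk z k). pose proof (V_var _ _ _ H1) as E1. pose proof (V_var _ _ _ H2) as E2.
    apply Rabs_le_inv in E1. apply Rabs_le_inv in E2. lra. }
  assert (HL : forall p, V y - V x - 2 * T p <= L x C Hx p y).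
  { intro p. apply (lim_ge_const_ev _ _ _ 0 (fun n _ => Hs n p) (L_cv x C Hx p y)). }
  assert (V y - V x - 2 * 0 <= h x C Hx y).
  { apply (lim_le_ev (fun p => V y - V x - 2 * T p) (fun p => L x C Hx p y) _ _ 0).
    intros; apply HL. apply CV_minus. apply Un_cv_const.
    replace (2 * 0) with (0 + 0) by ring. apply (Un_cv_ext (fun p => T p + T p)); [intros; ring|apply CV_plus; apply T_cv0].
    apply h_cv. }
  lra. Qed.

Definition cal_pre (y : Sigma) : {x | shift x = y /\ V x + H x = V y + Hbar} :=
  constructive_indefinite_description _ (proj2 (proj2 HV y)).

Fixpoint yb (y : Sigma) (i : nat) : Sigma :=
  match i with O => y | S j => proj1_sig (cal_pre (yb y j)) end.

Lemma yb_shift y i : shift (yb y (S i)) = yb y i.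
Proof. simpl. exact (proj1 (proj2_sig (cal_pre (yb y i)))). Qed.
Lemma yb_cal y i : V (yb y (S i)) + H (yb y (S i)) = V (yb y i) + Hbar.
Proof. simpl. exact (proj2 (proj2_sig (cal_pre (yb y i)))). Qed.

Lemma yb_shiftn y k : shiftn k (yb y k) = y.
Proof. induction k. reflexivity. rewrite shiftn_S, yb_shift; auto. Qed.

Lemma yb_birk y k : B (yb y k) k = V y - V (yb y k).
Proof. induction k. simpl; ring. rewrite birkhoff_front, yb_shift, IHk. pose proof (yb_cal y k). lra. Qed.

Definition nuE (y : Sigma) (k : nat) := nuA k (fun i => yb y (S i)).

Lemma nuE_inv y k w : (1 <= k)%nat -> Rabs (nuE y k w - (nuE y k (false :: w) + nuE y k (true :: w))) <= / INR k.
Proof. intros Hk. unfold nuE, nuA. rewrite <- Rmult_plus_distr_l, <- sumN_plus, <- Rmult_minus_distr_l.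
  rewrite (sumN_ext _ (fun i => ind (yb y (S i)) (false :: w) + ind (yb y (S i)) (true :: w)) (fun i => ind (yb y i) w)).
  2:{ intros. rewrite ind_cons_sum, yb_shift; auto. }
  rewrite (sumN_shift k (fun i => ind (yb y i) w)).
  assert (0 < / INR k) by (apply Rinv_0_lt_compat, lt_0_INR; lia).
  rewrite Rabs_mult, (Rabs_right (/ INR k)) by lra.
  pose proof (ind_01 (yb y 0) w). pose proof (ind_01 (yb y k) w).
  apply Rle_trans with (/ INR k * 1); [apply Rmult_le_compat_l; [lra|apply Rabs_le; lra] | lra]. Qed.

Lemma nuE_avg y k : (1 <= k)%nat -> / INR k * sumN k (fun i => H (yb y (S i))) = Hbar + / INR k * (V y - V (yb y k)).
Proof. intros Hk. rewrite (sumN_ext _ _ (fun i => (V (yb y i) - V (yb y (S i))) + Hbar)).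
  2:{ intros. pose proof (yb_cal y i). lra. }
  rewrite sumN_plus, sumN_minus, (sumN_shift k (fun i => V (yb y i))), sumN_const. change (yb y 0) with y.
  field. apply not_0_INR; lia. Qed.

Lemma BH_bound z : Rabs (H z) <= Rabs (H (ext [])) + v 0.
Proof. pose proof (var_le 0 z (ext []) (agree_0 _ _)). pose proof (Rabs_triang (H z - H (ext [])) (H (ext []))).
  replace (H z - H (ext []) + H (ext [])) with (H z) in H1 by ring. lra. Qed.

Lemma mather_point y : exists x C (Hx : forall k, B x k <= C), Mather H Hbar x /\ V y = V x + h x C Hx y.
Proof.
  destruct (measure_cluster (nuE y)) as [mu Hmu].
  { intros k w. split. apply nuA_nonneg. apply nuA_le1. }
  assert (Hnn : forall w, 0 <= mu w).
  { intro w. apply le_eps. intros eps He. destruct (Hmu (length w) eps 1%nat He) as [k [Hk Hkw]].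
    specialize (Hkw w (le_n _)). apply Rabs_lt_inv in Hkw. pose proof (nuA_nonneg k (fun i => yb y (S i)) w).
    unfold nuE in Hkw. lra. }
  assert (Hprob : prob_measure mu).
  { split; [auto|split].
    - apply eq_eps. intros eps He. destruct (Hmu 0%nat eps 1%nat He) as [k [Hk Hkw]].
      specialize (Hkw [] (le_n _)). destruct (nuA_prob k (fun i => yb y (S i)) Hk) as [_ [H1 _]].
      unfold nuE in Hkw. rewrite H1 in Hkw. rewrite Rabs_minus_sym; auto.
    - intro w. apply eq_eps. intros eps He. destruct (Hmu (S (length w)) (eps / 3) 1%nat) as [k [Hk Hkw]]; [lra|].
      destruct (nuA_prob k (fun i => yb y (S i)) Hk) as [_ [_ Ha]].
      pose proof (Hkw w ltac:(lia)) as E1. pose proof (Hkw (w ++ [false]) ltac:(rewrite length_app; simpl; lia)) as E2.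
      pose proof (Hkw (w ++ [true]) ltac:(rewrite length_app; simpl; lia)) as E3.
      unfold nuE in *. rewrite (Ha w) in E1. apply Rabs_lt_inv in E1; apply Rabs_lt_inv in E2; apply Rabs_lt_inv in E3.
      apply Rabs_def1; lra. }
  assert (Hinv : inv_prob mu).
  { split; auto. intro w. apply eq_eps. intros eps He.
    destruct (small_inv (eps / 4)) as [N [HN1 HN]]; [lra|].
    destruct (Hmu (S (length w)) (eps / 4) N) as [k [Hk Hkw]]; [lra|].
    pose proof (Hkw w ltac:(lia)) as E1. pose proof (Hkw (false :: w) ltac:(simpl; lia)) as E2.
    pose proof (Hkw (true :: w) ltac:(simpl; lia)) as E3. pose proof (nuE_inv y k w ltac:(lia)) as E4.
    specialize (HN k Hk). apply Rabs_lt_inv in E1; apply Rabs_lt_inv in E2; apply Rabs_lt_inv in E3. apply Rabs_le_inv in E4.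
    apply Rabs_def1; lra. }
  destruct (integral_exists mu Hprob H v var_le v_cv0) as [I [HI HIb]].
  set (BH := Rabs (H (ext [])) + v 0).
  assert (HBH : 0 <= BH) by (unfold BH; pose proof (Rabs_pos (H (ext []))); pose proof (v_nonneg 0); lra).
  assert (HIH : I = Hbar).
  { apply eq_eps. intros eps He.
    destruct (v_cv0 (eps / 4)) as [n Hn]; [lra|]. specialize (Hn n (le_n n)). unfold R_dist in Hn.
    rewrite Rminus_0_r, Rabs_right in Hn by (apply Rle_ge, v_nonneg).
    assert (Hp2 : 0 < 2 ^ n) by (apply pow_lt; lra).
    set (eps' := eps / 4 / (2 ^ n * (BH + 1))).
    assert (He' : 0 < eps') by (unfold eps'; apply Rdiv_lt_0_compat; [lra|]; apply Rmult_lt_0_compat; lra).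
    destruct (small_inv (eps / (4 * (T 0 + 1)))) as [N [HN1 HN]].
    { apply Rdiv_lt_0_compat; [lra|]. pose proof (T_nonneg 0); lra. }
    destruct (Hmu n eps' N He') as [k [Hk Hkw]].
    assert (Hk1 : (1 <= k)%nat) by lia.
    pose proof (HIb n) as E1. apply Rabs_le_inv in E1.
    assert (E2 : Rabs (riemann_sum mu H n - riemann_sum (nuE y k) H n) <= eps / 4).
    { rewrite !riemann_SW, <- SW_minus.
      apply Rle_trans with (SW n (fun _ => eps' * BH)).
      - apply SW_abs. intros w Hw. rewrite <- Rmult_minus_distr_r, Rabs_mult.
        apply Rmult_le_compat; try apply Rabs_pos.
        + specialize (Hkw w ltac:(lia)). rewrite Rabs_minus_sym; left; auto.
        + apply BH_bound.
      - rewrite SW_const. unfold eps'. apply Rle_trans with (eps / 4 * (BH / (BH + 1))).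
        + right. field. split; lra.
        + assert (BH / (BH + 1) <= 1). { apply Rmult_le_reg_r with (BH + 1); [lra|]. unfold Rdiv. rewrite Rmult_assoc, Rinv_l by lra. lra. }
          nra. }
    pose proof (riemann_nuA_close k (fun i => yb y (S i)) H v n Hk1 var_le) as E3.
    cbv beta in E3. rewrite nuE_avg in E3 by auto. fold (nuE y k) in E3.
    assert (E4 : Rabs (/ INR k * (V y - V (yb y k))) <= eps / 4).
    { specialize (HN k Hk). pose proof (V_var 0 y (yb y k) (agree_0 _ _)) as E5.
      assert (0 < / INR k) by (apply Rinv_0_lt_compat, lt_0_INR; lia).
      rewrite Rabs_mult, Rabs_right by lra. pose proof (T_nonneg 0).
      apply Rle_trans with (/ INR k * T 0). apply Rmult_le_compat_l; lra.
      apply Rle_trans with (eps / (4 * (T 0 + 1)) * (T 0 + 1)). nra. right; field; lra. }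
    apply Rabs_le_inv in E2. apply Rabs_le_inv in E3. apply Rabs_le_inv in E4. apply Rabs_def1; lra. }
  subst I.
  assert (Hmin : minimizing H Hbar mu) by (split; auto).
  destruct (greedy (fun w => 0 < mu w)) as [x Hx].
  { destruct Hprob as [_ [H1 _]]. rewrite H1; lra. }
  { intros w Hw. destruct Hprob as [_ [_ Ha]]. rewrite (Ha w) in Hw.
    pose proof (Hnn (w ++ [false])). pose proof (Hnn (w ++ [true])).
    destruct (Rlt_dec 0 (mu (w ++ [true]))); [left; auto| right; lra]. }
  assert (HM : Mather H Hbar x) by (exists mu; split; auto).
  exists x, (T 0), (mather_bounded x HM). split; auto.
  assert (Hvisit : forall n p, exists k, (n <= k)%nat /\ agree p (yb y k) x).
  { intros n p. apply NNPP. intro Hno.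
    assert (Hno' : forall k, (n <= k)%nat -> ~ agree p (yb y k) x).
    { intros k Hk Ha. apply Hno. exists k; auto. }
    set (al := mu (prefix p x)). assert (Hal : 0 < al) by apply Hx.
    destruct (INR_unbounded (2 * INR n / al)) as [N0 HN0].
    destruct (Hmu p (al / 2) (S N0)) as [k [Hk Hkw]]; [lra|].
    specialize (Hkw (prefix p x) ltac:(rewrite length_prefix; lia)). fold al in Hkw.
    apply Rabs_lt_inv in Hkw. unfold nuE, nuA in Hkw.
    assert (Hsb : sumN k (fun i => ind (yb y (S i)) (prefix p x)) <= INR n).
    { apply sumN_bound. intros; apply ind_01. intros i Hi.
      unfold ind. rewrite length_prefix. destruct list_eq_dec as [e|]; auto. exfalso.
      apply (Hno' (S i) Hi). apply agree_prefix; auto. }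
    assert (HkI : 0 < INR k) by (apply lt_0_INR; lia).
    assert (HkN : INR N0 < INR k) by (apply lt_INR; lia).
    assert (sumN k (fun i => ind (yb y (S i)) (prefix p x)) > INR k * (al / 2)).
    { apply Rmult_lt_reg_l with (/ INR k). apply Rinv_0_lt_compat; auto.
      rewrite <- Rmult_assoc, Rinv_l, Rmult_1_l by lra. lra. }
    assert (INR N0 * al > 2 * INR n).
    { unfold Rdiv in HN0. apply Rmult_lt_reg_r with (/ al). apply Rinv_0_lt_compat; auto.
      replace (INR N0 * al * / al) with (INR N0) by (field; lra). lra. }
    nra. }
  apply Rle_antisym; swap 1 2.
  - assert (HL : forall p, L x (T 0) (mather_bounded x HM) p y <= V y - V x + T p).
    { intro p. apply (lim_le_const_ev (fun n => s x n p y) _ _ 0); [|apply L_cv]. intros n _.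
      destruct (Hvisit n p) as [k [Hk Ha]].
      apply Rle_trans with (B (yb y k) k).
      + apply (is_inf_le _ _ _ (s_inf x n p y)). exists k, (yb y k). repeat split; auto.
        rewrite yb_shiftn. apply agree_refl.
      + rewrite yb_birk. pose proof (V_var _ _ _ Ha) as E. apply Rabs_le_inv in E. lra. }
    assert (h x (T 0) (mather_bounded x HM) y <= V y - V x + 0).
    { apply (lim_le_ev (fun p => L x (T 0) (mather_bounded x HM) p y) (fun p => V y - V x + T p) _ _ 0). intros; apply HL. apply h_cv.
      apply CV_plus. apply Un_cv_const. apply T_cv0. }
    lra.
  - apply V_le_h.
Qed.

End Cal.

Theorem main_result :
  (forall x, Mather H Hbar x ->
     exists V : Sigma -> R,
       (forall y, peierls_is H Hbar x y (V y)) /\ in_K H V /\ calibrated H Hbar V) /\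
  (forall V : Sigma -> R, calibrated H Hbar V ->
     in_K H V /\
     forall y,
       (forall x, Mather H Hbar x ->
          exists r, peierls_is H Hbar x y r /\ V y <= V x + r) /\
       (exists x r, Mather H Hbar x /\ peierls_is H Hbar x y r /\ V y = V x + r)).
Proof. split.
  - intros x Hx. apply (part1_core x (T 0)). apply mather_bounded; auto.
  - intros V HV. split. apply V_in_K; auto. intro y. split.
    + intros x Hx. exists (h x (T 0) (mather_bounded x Hx) y). split. apply h_peierls. apply V_le_h; auto.
    + destruct (mather_point V HV y) as [x [C [Hx [HM Heq]]]]. exists x, (h x C Hx y). repeat split; auto.
      apply h_peierls.
Qed.

End Main.


Theorem proposition2p5 (H : Sigma -> R) (Hbar : R)
  (Hcont : continuous_S H) (Hsum : summable_variation H)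
  (HHbar : Hbar_is H Hbar) :
  (forall x, Mather H Hbar x ->
     exists V : Sigma -> R,
       (forall y, peierls_is H Hbar x y (V y)) /\ in_K H V /\ calibrated H Hbar V) /\
  (forall V : Sigma -> R, calibrated H Hbar V ->
     in_K H V /\
     forall y,
       (forall x, Mather H Hbar x ->
          exists r, peierls_is H Hbar x y r /\ V y <= V x + r) /\
       (exists x r, Mather H Hbar x /\ peierls_is H Hbar x y r /\ V y = V x + r)).
Proof.
  destruct Hsum as [v [l [Hv Hl]]].
  exact (main_result H Hbar v l Hv Hl HHbar).
Qed.
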